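(* For every $n \in \mathbb{N}$ there are MILP instances $I_1$ and $I_2$ with $n \times n$ constraint matrices $A_1$ and $A_2$ respectively, such that $A_1$ has primal, dual and incidence treewidth bounded by an absolute constant and $\|A_1\|_\infty = 2$, $A_2$ is a 4-block $n$-fold matrix all of whose blocks are the $1\times 1$ matrix $(1)$, and the fractionality of $I_1$ is $2^{\Omega(n)}$ while the fractionality of $I_2$ is $\Omega(n)$.
   Context: An MILP instance is $\min\{\mathbf{c}\mathbf{x} \mid A\mathbf{x}=\mathbf{b},\ \mathbf{l}\le\mathbf{x}\le\mathbf{u},\ \mathbf{x}\in\mathbb{Z}^z\times\mathbb{Q}^q\}$ with integral data. The fractionality of an instance is the minimum, over all optimal solutions $\mathbf{x}$, of the largest denominator among the entries of $\mathbf{x}$ written in lowest terms. The primal graph of $A$ has the columns as vertices, adjacent if some row is non-zero in both; the dual graph is the primal graph of $A^{\intercal}$; the incidence graph is the bipartite graph on rows and columns with a row adjacent to a column if the corresponding entry is non-zero; primal/dual/incidence treewidth is the treewidth of these graphs. A 4-block $n$-fold matrix has the block form $\begin{pmatrix} C & D & D & \cdots & D \\ B & A & & & \\ B & & A & & \\ \vdots & & & \ddots & \\ B & & & & A\end{pmatrix}$ (other blocks zero) for blocks $A,B,C,D$. *)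

(* Defs.v *)
From HB Require Import structures.
From mathcomp Require Import all_boot all_order all_algebra.
Set Implicit Arguments. Unset Strict Implicit. Unset Printing Implicit Defensive.
Import Order.TTheory GRing.Theory Num.Theory.
Local Open Scope ring_scope.

Definition is_tree (m : nat) (e : rel 'I_m) : Prop :=
  [/\ (0 < m)%N, symmetric e, irreflexive e,
      (forall x y, connect e x y) &
      (forall p : seq 'I_m, uniq p -> (2 < size p)%N -> ~~ cycle e p)].

Definition treewidth_le (V : finType) (g : rel V) (k : nat) : Prop :=
  exists (m : nat) (e : rel 'I_m) (B : 'I_m -> {set V}),
    [/\ is_tree e,
        (forall v : V, exists t, v \in B t),
        (forall u v : V, g u v -> exists t, (u \in B t) && (v \in B t)),
        (forall (v : V) (t1 t2 : 'I_m), v \in B t1 -> v \in B t2 ->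
           connect [rel x y | [&& e x y, v \in B x & v \in B y]] t1 t2) &
        (forall t, (#|B t| <= k.+1)%N)].

Definition primal_graph (m n : nat) (A : 'M[int]_(m, n)) : rel 'I_n :=
  fun x y => (x != y) && [exists i : 'I_m, (A i x != 0) && (A i y != 0)].

Definition dual_graph (m n : nat) (A : 'M[int]_(m, n)) : rel 'I_m :=
  primal_graph A^T.

Definition incidence_graph (m n : nat) (A : 'M[int]_(m, n))
  : rel ('I_m + 'I_n)%type :=
  fun a b => match a, b with
             | inl i, inr j => A i j != 0
             | inr j, inl i => A i j != 0
             | _, _ => false
             end.

Definition mx_maxnorm (m n : nat) (A : 'M[int]_(m, n)) : nat :=
  (\max_(i < m) \max_(j < n) absz (A i j))%N.

Definition four_block_nfold (N r t p s : nat)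
  (A : 'M[int]_(p, s)) (B : 'M[int]_(p, t))
  (C : 'M[int]_(r, t)) (D : 'M[int]_(r, s)) :=
  block_mx C (\mxrow_(k < N) D) (\mxcol_(k < N) B) (\mxblock_(i < N, j < N) (if i == j then A else 0)).

(** * MILP instances
   min { c x | A x = b, l <= x <= u, x in Z^z x Q^(n-z) }, integral data;
   variables with index < z are the integer ones. *)
Record milp (m n : nat) := Milp {
  mA : 'M[int]_(m, n);
  mb : 'I_m -> int;
  mc : 'I_n -> int;
  ml : 'I_n -> int;
  mu : 'I_n -> int;
  mz : nat }.

Definition milp_feasible (m n : nat) (I : milp m n) (x : 'I_n -> rat) : Prop :=
  [/\ (forall i : 'I_m, \sum_(j < n) (mA I i j)%:~R * x j = (mb I i)%:~R),
      (forall j : 'I_n, (ml I j)%:~R <= x j <= (mu I j)%:~R) &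
      (forall j : 'I_n, (j < mz I)%N -> x j \is a Num.int)].

Definition milp_obj (m n : nat) (I : milp m n) (x : 'I_n -> rat) : rat :=
  \sum_(j < n) (mc I j)%:~R * x j.

Definition milp_optimal (m n : nat) (I : milp m n) (x : 'I_n -> rat) : Prop :=
  milp_feasible I x /\
  forall y, milp_feasible I y -> milp_obj I x <= milp_obj I y.

Definition max_denom (n : nat) (x : 'I_n -> rat) : nat :=
  (\max_(j < n) absz (denq (x j)))%N.

(* f is the fractionality of I: the minimum over all optimal solutions
   of the largest denominator (in particular an optimal solution exists). *)
Definition is_fractionality (m n : nat) (I : milp m n) (f : nat) : Prop :=
  (exists x, milp_optimal I x /\ max_denom x = f) /\
  (forall x, milp_optimal I x -> (f <= max_denom x)%N).

(* Main.v *)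
Require Import Defs.
From HB Require Import structures.
From mathcomp Require Import all_boot all_order all_algebra.
From mathcomp Require Import zify ring lra.
Import Order.TTheory GRing.Theory Num.Theory.

Section Aux.

Definition pathrel (N : nat) : rel 'I_N :=
  fun x y => ((val x).+1 == val y) || ((val y).+1 == val x).

Lemma path_acyclic N (p : seq 'I_N) : uniq p -> (2 < size p)%N -> ~~ cycle (@pathrel N) p.
Proof.
move=> up sp; apply/negP => cp.
have exP : exists i, (fun k => has (fun x : 'I_N => val x == k) p) i.
  case: p sp {up cp} => [|x p0] // _; exists (val x); by rewrite /= eqxx.
have ubP : forall i, (fun k => has (fun x : 'I_N => val x == k) p) i -> (i <= N)%N.
  move=> i /hasP [x _ /eqP <-]; exact: ltnW (ltn_ord x).
case: (ex_maxnP exP ubP) => mv /hasP [M MP /eqP HM] Hmax.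
have le_M : forall y, y \in p -> (val y <= val M)%N.
  move=> y yp; rewrite HM; apply: Hmax; apply/hasP; by exists y.
pose i := index M p.
have ip : (i < size p)%N by rewrite index_mem.
have Hrot : rot i p = M :: (drop i.+1 p ++ take i p).
  by rewrite /rot (drop_nth M ip) nth_index.
set t := drop i.+1 p ++ take i p in Hrot.
have ur : uniq (M :: t) by rewrite -Hrot rot_uniq.
have cr : cycle (@pathrel N) (M :: t) by rewrite -Hrot rot_cycle.
have st : (1 < size t)%N.
  have := size_rot i p; rewrite Hrot /= => h; lia.
have memt : forall y, y \in t -> y \in p.
  by move=> y yt; rewrite -(mem_rot i) Hrot inE yt orbT.
case: t ur cr st memt {Hrot} => [|b t'] //= /andP [Mnt /andP [bnt' ut']] /andP [eMb].
rewrite rcons_path => /andP [_ eaM] st memt.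
have bp : b \in p by apply: memt; rewrite inE eqxx.
have at' : last b t' \in t'.
  have Hl : forall (c : 'I_N) s, (0 < size s)%N -> last c s \in s.
    by move=> c [|d s] //= _; exact: mem_last.
  by apply: Hl; lia.
set a := last b t' in eaM at'.
have ap : a \in p by apply: memt; rewrite inE at' orbT.
have bM : b != M by apply: contraNneq Mnt => ->; rewrite inE eqxx.
have aM : a != M by apply: contraNneq Mnt => h; rewrite -h inE at' orbT.
have := le_M _ bp; have := le_M _ ap.
move: eMb eaM bM aM; rewrite /pathrel -!(inj_eq val_inj).
move=> /orP [/eqP h1|/eqP h1] /orP [/eqP h2|/eqP h2] h3 h4 h5 h6; rewrite /= in h1 h2 h3 h4 h5 h6; try lia.
have ab : a = b by apply: val_inj => /=; lia.
by move: bnt'; rewrite -ab at'.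
Qed.

Lemma path_connect N (x y : 'I_N) : connect (@pathrel N) x y.
Proof.
have sym : connect_sym (@pathrel N).
  by apply: sym_connect_sym => u v; rewrite /pathrel orbC.
have H : forall k (u v : 'I_N), val u = 0%N -> val v = k -> connect (@pathrel N) u v.
  elim=> [|k IH] u v hu hv.
    by have -> : u = v by apply: val_inj; rewrite hu hv.
  have kN : (k < N)%N by have := ltn_ord v; rewrite hv; lia.
  apply: connect_trans (IH u (Ordinal kN) hu erefl) _.
  by apply: connect1; rewrite /pathrel /= hv eqxx.
have xN : (0 < N)%N by have := ltn_ord x; lia.
pose z := Ordinal xN.
apply: (connect_trans (y := z)).
  by rewrite sym; exact: (H (val x)).
exact: (H (val y)).
Qed.

Lemma path_tw (V : finType) (g : rel V) (N : nat) (pos : V -> nat) :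
  (0 < N)%N -> (forall v, pos v < N)%N -> injective pos ->
  (forall u v, g u v -> (pos u <= (pos v).+1)%N /\ (pos v <= (pos u).+1)%N) ->
  treewidth_le g 1.
Proof.
move=> N0 posN posI gP.
pose B := fun t : 'I_N => [set v | (pos v == val t) || (pos v == (val t).+1)].
exists N, (@pathrel N), B; split.
- split => //.
  + by move=> u v; rewrite /pathrel orbC.
  + by move=> u; rewrite /pathrel /=; apply/negP; lia.
  + exact: path_connect.
  + exact: path_acyclic.
- move=> v; exists (Ordinal (posN v)); by rewrite inE eqxx.
- move=> u v /gP [h1 h2].
  case: (leqP (pos u) (pos v)) => h.
    exists (Ordinal (posN u)); rewrite !inE /= eqxx /=; apply/orP; lia.
  exists (Ordinal (posN v)); rewrite !inE /= eqxx /= andbT; apply/orP; lia.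
- move=> v t1 t2; rewrite !inE => h1 h2.
  case: (eqVneq t1 t2) => [->|ne]; first exact: connect0.
  apply: connect1; rewrite /= !inE h1 h2 /= andbT.
  have ne' : val t1 != val t2 by rewrite (inj_eq val_inj).
  rewrite /pathrel; move: h1 h2 => /orP [/eqP h1|/eqP h1] /orP [/eqP h2|/eqP h2];
    apply/orP; rewrite /= in ne' h1 h2 *; lia.
- move=> t.
  have U : uniq [seq pos v | v <- enum (B t)].
    by rewrite map_inj_uniq ?enum_uniq.
  have Sub : {subset [seq pos v | v <- enum (B t)] <= [:: val t; (val t).+1]}.
    move=> k /mapP [v]; rewrite mem_enum inE => /orP [/eqP h|/eqP h] ->;
      by rewrite !inE h eqxx ?orbT.
  have := uniq_leq_size U Sub; by rewrite size_map -cardE.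
Qed.

Local Open Scope ring_scope.

Lemma frac_unique m n (I : milp m n) (x : 'I_n -> rat) :
  milp_feasible I x -> (forall y, milp_feasible I y -> forall j, y j = x j) ->
  is_fractionality I (max_denom x).
Proof.
move=> fx U; split.
  exists x; split => //; split => // y fy.
  have -> : milp_obj I y = milp_obj I x.
    by rewrite /milp_obj; apply: eq_bigr => j _; rewrite (U y fy j).
  exact: lexx.
move=> y [fy _]; have -> : max_denom y = max_denom x.
  by rewrite /max_denom; apply: eq_bigr => j _; rewrite (U y fy j).
exact: leqnn.
Qed.

Definition A1 (n : nat) : 'M[int]_(n, n) :=
  \matrix_(i, j) ((if i == j then (if val i == 0%N then 1 else -2) else 0)
                  + (if val i == (val j).+1 then 1 else 0)).

Definition I1 (n : nat) : milp n n :=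
  Milp (A1 n) (fun i => if val i == 0%N then 1 else 0) (fun _ => 0)
       (fun _ => 0) (fun _ => 1) 0.

Definition x1 (n : nat) (j : 'I_n) : rat := ((2 : rat) ^+ j)^-1.

Lemma A1_nz n (i j : 'I_n) : A1 n i j != 0 -> (val j == val i) || ((val j).+1 == val i).
Proof.
rewrite mxE; case: (eqVneq i j) => [->|ne]; first by rewrite eqxx.
case: (eqVneq (val i) (val j).+1) => [->|h]; first by rewrite orbT.
by [].
Qed.

Lemma sum_prev n (i : 'I_n) (F : 'I_n -> rat) :
  \sum_(j < n) (if val i == (val j).+1 then F j else 0) =
  (if val i is k.+1 then (if (k < n)%N =P true is ReflectT h then F (Ordinal h) else 0) else 0).
Proof.
case: i => [[|k] hk] /=.
  by rewrite big1.
case: eqP => [h|]; last by move=> h; exfalso; apply: h; lia.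
rewrite (bigD1 (Ordinal h)) //= eqxx big1 ?addr0 // => j jk.
case: eqP => // [[e]]; move: jk; suff -> : j = Ordinal h by rewrite eqxx.
exact: val_inj.
Qed.

Lemma A1_row n (i : 'I_n) (y : 'I_n -> rat) :
  \sum_(j < n) (A1 n i j)%:~R * y j =
  (if val i == 0%N then 1 else -2) * y i +
  (if val i is k.+1 then (if (k < n)%N =P true is ReflectT h then y (Ordinal h) else 0) else 0).
Proof.
rewrite -sum_prev.
rewrite (eq_bigr (fun j => (if j == i then (if val i == 0%N then 1 else -2) * y j else 0)
   + (if val i == (val j).+1 then y j else 0))); last first.
  move=> j _; rewrite mxE intrD mulrDl; congr (_ + _).
    rewrite eq_sym; case: eqP => [->|]; last by rewrite mul0r.
    by case: eqP.
  by case: eqP; rewrite ?mul1r ?mul0r.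
rewrite big_split /= -big_mkcond big_pred1_eq //.
Qed.

Lemma two_pow_gt0 k : 0 < (2 : rat) ^+ k.
Proof. by apply: exprn_gt0. Qed.

Lemma x1_feasible n : milp_feasible (I1 n) (x1 n).
Proof.
split.
- move=> i; rewrite A1_row /=.
  case: i => [[|k] hk] /=.
    by rewrite /x1 /= expr0 invr1 mulr1.
  case: eqP => [h|h]; last by exfalso; apply: h; lia.
  rewrite /x1 /= exprS.
  have := two_pow_gt0 k; move: ((2 : rat) ^+ k) => t tp.
  field; lra.
- move=> j; rewrite /= /x1; apply/andP; split.
    by rewrite invr_ge0 ltW // two_pow_gt0.
  by rewrite invf_le1 ?two_pow_gt0 // exprn_ege1 // ler1n.
- by [].
Qed.

Lemma x1_unique n (y : 'I_n -> rat) : milp_feasible (I1 n) y -> forall j, y j = x1 n j.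
Proof.
case=> [R _ _].
suff H : forall k (hk : (k < n)%N), y (Ordinal hk) = x1 n (Ordinal hk).
  by case=> k hk; exact: H.
elim=> [|k IH] hk.
  have := R (Ordinal hk); rewrite A1_row /= mul1r addr0 => ->.
  by rewrite /x1 /= expr0 invr1.
have := R (Ordinal hk); rewrite A1_row /=.
case: eqP => [h|h]; last by exfalso; apply: h; lia.
rewrite IH /x1 /= exprS.
have := two_pow_gt0 k; move: ((2 : rat) ^+ k) => t tp.
rewrite invfM; move: (t^-1) => u E.
have E' : y (Ordinal hk) = u / 2.
  move: E; rewrite /=; lra.
by rewrite E' mulrC.
Qed.

Lemma denq_x1 n (j : 'I_n) : absz (denq (x1 n j)) = (2 ^ j)%N.
Proof.
have -> : x1 n j = (((2 ^ j)%N%:Z)%:~R)^-1.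
  by rewrite /x1 -pmulrn natrX.
rewrite denqVz //.
by rewrite eqz_nat expn_eq0.
Qed.

Lemma x1_denom n : (1 < n)%N -> (2 ^ (n %/ 2) <= max_denom (x1 n))%N.
Proof.
move=> n1.
have hk : (n.-1 < n)%N by lia.
apply: (leq_trans _ (leq_bigmax (Ordinal hk))).
rewrite denq_x1 /=.
apply: leq_pexp2l => //.
lia.
Qed.

Lemma A1_norm n : (1 < n)%N -> mx_maxnorm (A1 n) = 2%N.
Proof.
move=> n1; apply/eqP; rewrite eqn_leq; apply/andP; split.
  apply/bigmax_leqP => i _; apply/bigmax_leqP => j _.
  rewrite /A1 mxE; case: (i == j); case: (val i == 0%N); by case: (val i == (val j).+1).
pose o := Ordinal n1.
apply: (leq_trans _ (leq_bigmax o)); apply: (leq_trans _ (leq_bigmax o)).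
by rewrite mxE eqxx.
Qed.

Lemma A1_tw n : (1 < n)%N ->
  [/\ treewidth_le (primal_graph (A1 n)) 1,
      treewidth_le (dual_graph (A1 n)) 1 &
      treewidth_le (incidence_graph (A1 n)) 1].
Proof.
move=> n1; split.
- apply: (@path_tw _ _ n (fun j => val j)).
  + lia.
  + by move=> v; exact: ltn_ord.
  + by move=> a b; apply: val_inj.
  move=> u v /andP [_ /existsP [i /andP [hu hv]]].
  move: (@A1_nz _ _ _ hu) (@A1_nz _ _ _ hv) => /orP [/eqP a|/eqP a] /orP [/eqP b|/eqP b]; simpl in *; lia.
- apply: (@path_tw _ _ n (fun j => val j)).
  + lia.
  + by move=> v; exact: ltn_ord.
  + by move=> a b; apply: val_inj.
  move=> u v /andP [_ /existsP [i /andP [hu hv]]].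
  rewrite mxE in hu; rewrite mxE in hv.
  move: (@A1_nz _ _ _ hu) (@A1_nz _ _ _ hv) => /orP [/eqP a|/eqP a] /orP [/eqP b|/eqP b]; simpl in *; lia.
- pose pos := fun v : 'I_n + 'I_n => match v with inl i => (2 * i)%N | inr j => (2 * j).+1 end.
  apply: (@path_tw _ _ (2 * n) pos).
  + lia.
  + by case=> [i|i] /=; have := ltn_ord i; lia.
  + case=> [i|j] [i'|j'] /= h; try lia.
      by congr inl; apply: val_inj => /=; lia.
    by congr inr; apply: val_inj => /=; lia.
  + case=> [i|j] [i'|j'] //= h.
      move: (@A1_nz _ _ _ h) => /orP [/eqP a|/eqP a]; simpl in *; lia.
    move: (@A1_nz _ _ _ h) => /orP [/eqP a|/eqP a]; simpl in *; lia.
Qed.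


Notation SS n := (\sum_(i < n) 1)%N.

Lemma SS_eq n : SS n = n.
Proof. by rewrite sum_nat_const card_ord muln1. Qed.

Lemma sig1_inj n (s s' : 'I_(SS n)) :
  tagnat.sig1 s = tagnat.sig1 s' -> s = s'.
Proof.
move=> h; apply: val_inj.
change (nat_of_ord s = nat_of_ord s'); rewrite (tagnat.rect s) (tagnat.rect s') h /=.
have e1 := ltn_ord (tagnat.sig2 s); have e2 := ltn_ord (tagnat.sig2 s').
congr (_ + _)%N; lia.
Qed.

Definition M2 n : 'M[int]_(1 + SS n, 1 + SS n) :=
  @four_block_nfold n 1 1 1 1 (const_mx 1) (const_mx 1) (const_mx 1) (const_mx 1).

Lemma M2_ul n : M2 n (lshift (SS n) ord0) (lshift (SS n) ord0) = 1.
Proof. by rewrite /M2 /four_block_nfold block_mxEul mxE. Qed.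
Lemma M2_ur n b : M2 n (lshift (SS n) ord0) (rshift 1 b) = 1.
Proof. by rewrite /M2 /four_block_nfold block_mxEur /mxrow !mxE. Qed.
Lemma M2_dl n a : M2 n (rshift 1 a) (lshift (SS n) ord0) = 1.
Proof. by rewrite /M2 /four_block_nfold block_mxEdl /mxcol !mxE. Qed.
Lemma M2_dr n a b : M2 n (rshift 1 a) (rshift 1 b) = if a == b then 1 else 0.
Proof.
rewrite /M2 /four_block_nfold block_mxEdr /mxblock !mxE.
case: (eqVneq (tagnat.sig1 a) (tagnat.sig1 b)) => [h|h].
  by rewrite (@sig1_inj _ _ _ h) eqxx mxE.
rewrite mxE; case: eqP => // e; by rewrite e eqxx in h.
Qed.

Lemma M2_top n (y : 'I_(1 + SS n) -> rat) :
  \sum_(j < 1 + SS n) (M2 n (lshift (SS n) ord0) j)%:~R * y j =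
  y (lshift (SS n) ord0) + \sum_(b < SS n) y (rshift 1 b).
Proof.
rewrite big_split_ord /= big_ord1 M2_ul mul1r; congr (_ + _).
by apply: eq_bigr => b _; rewrite M2_ur mul1r.
Qed.

Lemma M2_low n a (y : 'I_(1 + SS n) -> rat) :
  \sum_(j < 1 + SS n) (M2 n (rshift 1 a) j)%:~R * y j =
  y (lshift (SS n) ord0) + y (rshift 1 a).
Proof.
rewrite big_split_ord /= big_ord1 M2_dl mul1r; congr (_ + _).
rewrite (bigD1 a) //= M2_dr eqxx mul1r.
have -> : \sum_(b < SS n | b != a) (M2 n (rshift 1 a) (rshift 1 b))%:~R * y (rshift 1 b) = 0.
  by apply: big1 => b ba; rewrite M2_dr eq_sym (negbTE ba) mul0r.
by rewrite addr0.
Qed.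

Definition I2 n : milp (1 + SS n) (1 + SS n) :=
  Milp (M2 n) (fun i => if val i == 0%N then 1 else 0) (fun _ => 0)
       (fun _ => -1) (fun _ => 1) 0.

Definition q2 n : rat := ((n%:R : rat) - 1)^-1.

Definition x2 n (j : 'I_(1 + SS n)) : rat := if val j == 0%N then - q2 n else q2 n.

Lemma sum_const_S n (c : rat) : \sum_(b < SS n) c = n%:R * c.
Proof. by rewrite sumr_const card_ord SS_eq mulr_natl. Qed.

Lemma q2_prop n : (1 < n)%N -> 0 < q2 n /\ q2 n <= 1 /\ (n%:R - 1) * q2 n = 1.
Proof.
move=> n1.
have h : (1 : rat) <= n%:R - 1.
  have : (2 : rat) <= n%:R by rewrite ler_nat.
  lra.
have hp : (0 : rat) < n%:R - 1 by lra.
split; first by rewrite /q2 invr_gt0.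
split; first by rewrite /q2 invf_le1.
by rewrite /q2 divff // gt_eqF.
Qed.

Lemma x2_feasible n : (1 < n)%N -> milp_feasible (I2 n) (x2 n).
Proof.
move=> n1; have [qp [q1 qe]] := q2_prop n n1.
split.
- move=> i; case: (splitP i) => [k|k] ik.
    have -> : i = lshift (SS n) ord0 by apply: val_inj; rewrite /= ik; case: k {ik} => [[]].
    rewrite M2_top /= /x2 /=.
    rewrite (eq_bigr (fun _ => q2 n)) => [|b _] //.
    rewrite sum_const_S; move: qe; lra.
  have -> : i = rshift 1 k by apply: val_inj; rewrite /= ik.
  rewrite M2_low /= /x2 /=; lra.
- move=> j; rewrite /= /x2; case: ifP => _; apply/andP; split; lra.
- by [].
Qed.

Lemma x2_unique n (y : 'I_(1 + SS n) -> rat) : (1 < n)%N ->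
  milp_feasible (I2 n) y -> forall j, y j = x2 n j.
Proof.
move=> n1 [R _ _]; have [qp [q1 qe]] := q2_prop n n1.
have Hl : forall a, y (rshift 1 a) = - y (lshift (SS n) ord0).
  move=> a; have := R (rshift 1 a); rewrite M2_low /= => e; lra.
have Ht := R (lshift (SS n) ord0); rewrite M2_top /= in Ht.
rewrite (eq_bigr (fun _ => - y (lshift (SS n) ord0))) in Ht; last by move=> b _; exact: Hl.
rewrite sum_const_S in Ht.
have y0 : y (lshift (SS n) ord0) = - q2 n.
  have e : (n%:R - 1) * (- y (lshift (SS n) ord0)) = 1 by lra.
  have : (n%:R - 1) * (- y (lshift (SS n) ord0)) = (n%:R - 1) * q2 n by rewrite e qe.
  move/mulfI; have hne : (n%:R - 1 : rat) != 0.
    by apply/negP => /eqP h0; move: qe; rewrite h0 mul0r => /eqP; rewrite eq_sym oner_eq0.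
  by move=> /(_ hne) e'; rewrite -e' opprK.
move=> j; case: (splitP j) => [k|k] jk.
  have -> : j = lshift (SS n) ord0 by apply: val_inj; rewrite /= jk; case: k {jk} => [[]].
  by rewrite y0 /x2.
have -> : j = rshift 1 k by apply: val_inj; rewrite /= jk.
by rewrite Hl y0 opprK /x2.
Qed.

Lemma x2_denom n : (1 < n)%N -> (n <= 2 * max_denom (x2 n))%N.
Proof.
move=> n1.
have : (n.-1 <= max_denom (x2 n))%N.
  apply: leq_trans (leq_bigmax (lshift (SS n) ord0)).
  rewrite /x2 /= denqN.
  have -> : q2 n = (((n.-1)%N%:Z)%:~R)^-1.
    by rewrite /q2 -[in n%:R](prednK (ltnW n1)) -natr1 addrK pmulrn.
  rewrite denqVz //; lia.
lia.
Qed.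

End Aux.

Theorem lemma1 :
  exists (k a c n0 : nat), (0 < a)%N /\ (0 < c)%N /\
  forall n : nat, (n0 <= n)%N ->
    exists (I1 : milp n n)
           (I2 : milp (1 + \sum_(i < n) 1) (1 + \sum_(i < n) 1))
           (f1 f2 : nat),
      [/\ treewidth_le (primal_graph (mA I1)) k,
          treewidth_le (dual_graph (mA I1)) k,
          treewidth_le (incidence_graph (mA I1)) k,
          mx_maxnorm (mA I1) = 2%N &
          mA I2 = four_block_nfold n (const_mx 1%R) (const_mx 1%R)
                                     (const_mx 1%R) (const_mx 1%R)] /\
      [/\ is_fractionality I1 f1, is_fractionality I2 f2,
          (2 ^ (n %/ a) <= f1)%N & (n <= c * f2)%N].
Proof.
exists 1%N, 2%N, 2%N, 2%N; split => //; split => // n n2.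
exists (I1 n), (I2 n), (max_denom (x1 n)), (max_denom (x2 n)).
have [t1 t2 t3] := A1_tw n n2.
split; first split => //.
- exact: A1_norm.
split.
- apply: frac_unique; first exact: x1_feasible.
  move=> y fy; exact: x1_unique.
- apply: frac_unique; first exact: x2_feasible.
  move=> y fy; exact: x2_unique.
- exact: x1_denom.
- exact: x2_denom.
Qed.
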